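(* For any connected locally finite cell complex $X$ with universal cover $\tilde X$, one has $\widetilde{\mathsf{TC}}(X)\ge\mathsf{TC}(\tilde X)$.
   Context: Normalized convention: $\mathsf{TC}$ of a contractible space is $0$; $\mathsf{TC}(Y)$ is the least $n$ such that $Y\times Y$ has an open cover by $n+1$ sets each admitting a continuous section of $Y^I\to Y\times Y$, $\alpha\mapsto(\alpha(0),\alpha(1))$. Let $P\colon\tilde X\to X$ be the universal cover with $\pi=\pi_1(X)$ acting by deck transformations, and $\tilde X\times_\pi\tilde X$ the quotient of $\tilde X\times\tilde X$ by the diagonal $\pi$-action. Let $p\colon X^I\to\tilde X\times_\pi\tilde X$, $p(\gamma)=[\tilde\gamma(0),\tilde\gamma(1)]$ for any lift $\tilde\gamma$ of $\gamma$, and $q\colon\tilde X\times_\pi\tilde X\to X\times X$, $q([x,y])=(Px,Py)$. $\widetilde{\mathsf{TC}}(X)$ is the least $k\ge0$ such that $X\times X$ has an open cover $U_0,\dots,U_k$ such that $p$ admits a continuous section over $q^{-1}(U_i)$ for each $i$. *)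

(* Defs.v *)
From HB Require Import structures.
From mathcomp Require Import all_boot all_order all_algebra generic_quotient.
From mathcomp Require Import all_classical all_reals all_analysis.
From mathcomp Require Import Rstruct Rstruct_topology.

Set Implicit Arguments.
Unset Strict Implicit.
Unset Printing Implicit Defensive.

Import Order.TTheory GRing.Theory Num.Theory.
Local Open Scope classical_set_scope.
Local Open Scope ring_scope.
Local Open Scope quotient_scope.

Notation Real := Rdefinitions.R.

Definition Iset : set Real := `[0, 1]%classic.
Definition Iunit : Type := set_type Iset.

Definition PathSp (Y : topologicalType) : Type :=
  set_type [set f : {compact-open, Iunit -> Y} | continuous (f : Iunit -> Y)].

Definition path_of (Y : topologicalType) (g : PathSp Y) : Iunit -> Y :=
  (set_val g : {compact-open, Iunit -> Y}).

Definition ev_section_over (Y : topologicalType) (U : set (Y * Y)) : Prop :=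
  exists s : Y * Y -> PathSp Y,
    {within U, continuous s} /\
    forall u, U u -> forall t : Iunit,
      (set_val t = 0 -> path_of (s u) t = u.1) /\
      (set_val t = 1 -> path_of (s u) t = u.2).

Definition TC_le (Y : topologicalType) (n : nat) : Prop :=
  exists U : 'I_n.+1 -> set (Y * Y),
    (forall i, open (U i)) /\
    (forall z, exists i, U i z) /\
    (forall i, ev_section_over (U i)).

Definition path_connected (T : topologicalType) : Prop :=
  [set: T] !=set0 /\
  forall a b : T, exists g : Iunit -> T, continuous g /\
    forall t : Iunit, (set_val t = 0 -> g t = a) /\ (set_val t = 1 -> g t = b).

Definition trivial_pi1 (T : topologicalType) : Prop :=
  forall g : Iunit -> T, continuous g ->
    (forall t0 t1 : Iunit, set_val t0 = 0 -> set_val t1 = 1 -> g t0 = g t1) ->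
    exists H : Iunit * Iunit -> T, continuous H /\
      forall (s t t0 : Iunit), set_val t0 = 0 ->
        (set_val t = 0 -> H (s, t) = g s) /\
        (set_val t = 1 -> H (s, t) = g t0) /\
        ((set_val s = 0 \/ set_val s = 1) -> H (s, t) = g t0).

Definition simply_connected (T : topologicalType) : Prop :=
  path_connected T /\ trivial_pi1 T.

Definition covering_map (Xt X : topologicalType) (P : Xt -> X) : Prop :=
  continuous P /\ (forall x, exists y, P y = x) /\
  forall x : X, exists U : set X, open U /\ U x /\
    exists (K : Type) (V : K -> set Xt),
      (forall k, open (V k)) /\
      (forall k l, k <> l -> V k `&` V l = set0) /\
      P @^-1` U = \bigcup_k V k /\
      forall k, {in V k &, injective P} /\ P @` V k = U /\
        (forall W, open W -> W `<=` V k -> open (P @` W)).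

Definition universal_cover (Xt X : topologicalType) (P : Xt -> X) : Prop :=
  covering_map P /\ simply_connected Xt.

Definition deck (Xt X : topologicalType) (P : Xt -> X) (g : Xt -> Xt) : Prop :=
  exists h : Xt -> Xt, cancel g h /\ cancel h g /\
    continuous g /\ continuous h /\ (forall x, P (g x) = P x).

Definition orb_rel (Xt X : topologicalType) (P : Xt -> X) : rel (Xt * Xt) :=
  fun a b => `[< exists g, deck P g /\ g a.1 = b.1 /\ g a.2 = b.2 >].

Lemma orb_refl (Xt X : topologicalType) (P : Xt -> X) : reflexive (orb_rel P).
Proof.
move=> a; apply/asboolP; exists id; split; last by [].
exists id; split; first by [].
split; first by [].
split; first by move=> ?; exact: cvg_id.
by split; first by move=> ?; exact: cvg_id.
Qed.

Lemma orb_sym (Xt X : topologicalType) (P : Xt -> X) : symmetric (orb_rel P).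
Proof.
have H : forall a b, orb_rel P a b -> orb_rel P b a.
  move=> a b /asboolP [g [[h [gh [hg [cg [ch Pg]]]]] [e1 e2]]].
  apply/asboolP; exists h; split.
    exists g; do 4 split => //.
    by move=> x; rewrite -[in RHS](hg x) Pg.
  by rewrite -e1 -e2 !gh.
by move=> a b; apply/idP/idP => /H.
Qed.

Lemma orb_trans (Xt X : topologicalType) (P : Xt -> X) : transitive (orb_rel P).
Proof.
move=> b a c /asboolP [g [[h [gh [hg [cg [ch Pg]]]]] [e1 e2]]].
move=> /asboolP [g' [[h' [gh' [hg' [cg' [ch' Pg']]]]] [e1' e2']]].
apply/asboolP; exists (g' \o g); split.
  exists (h \o h'); split; first by move=> x /=; rewrite gh' gh.
  split; first by move=> x /=; rewrite hg hg'.
  split; first by move=> x; apply: continuous_comp; [exact: cg | exact: cg'].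
  split; first by move=> x; apply: continuous_comp; [exact: ch' | exact: ch].
  by move=> x /=; rewrite Pg' Pg.
by rewrite /= e1 e2 e1' e2'.
Qed.

Definition orb_equiv (Xt X : topologicalType) (P : Xt -> X) : equiv_rel (Xt * Xt) :=
  EquivRel (orb_rel P) (@orb_refl Xt X P) (@orb_sym Xt X P) (@orb_trans Xt X P).

Definition orbSp (Xt X : topologicalType) (P : Xt -> X) : topologicalType :=
  quotient_topology {eq_quot (orb_equiv P)}.

Definition qmap (Xt X : topologicalType) (P : Xt -> X) (z : orbSp P) : X * X :=
  (P (repr z).1, P (repr z).2).

(* p(gamma) = z, where p(gamma) = [gt(0), gt(1)] for a lift gt of gamma *)
Definition p_maps_to (Xt X : topologicalType) (P : Xt -> X)
    (gam : PathSp X) (z : orbSp P) : Prop :=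
  exists gt : Iunit -> Xt, continuous gt /\
    (forall t, P (gt t) = path_of gam t) /\
    forall t0 t1 : Iunit, set_val t0 = 0 -> set_val t1 = 1 ->
      (\pi_(orbSp P) (gt t0, gt t1) : orbSp P) = z.

Definition TCt_le (Xt X : topologicalType) (P : Xt -> X) (k : nat) : Prop :=
  exists U : 'I_k.+1 -> set (X * X),
    (forall i, open (U i)) /\
    (forall z, exists i, U i z) /\
    (forall i, exists s : orbSp P -> PathSp X,
        {within @qmap _ _ P @^-1` U i, continuous s} /\
        forall z : orbSp P, U i (qmap z) -> p_maps_to (s z) z).

Definition sqnorm (n : nat) (v : 'rV[Real]_n) : Real := \sum_(i < n) v ord0 i ^+ 2.
Definition disk (n : nat) : set 'rV[Real]_n := [set v | sqnorm v <= 1].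
Definition odisk (n : nat) : set 'rV[Real]_n := [set v | sqnorm v < 1].
Definition sphere (n : nat) : set 'rV[Real]_n := [set v | sqnorm v = 1].
Arguments disk n : clear implicits.
Arguments odisk n : clear implicits.
Arguments sphere n : clear implicits.

Definition ocell (X : topologicalType) (J : Type) (d : J -> nat)
  (Phi : forall j, 'rV[Real]_(d j) -> X) (j : J) : set X := Phi j @` odisk (d j).

(* A CW structure on X with cells indexed by J, cell j of dimension d j and
   characteristic map Phi j : D^{d j} -> X (Hatcher, Prop. A.2). *)
Definition CW_structure (X : topologicalType) (J : Type) (d : J -> nat)
    (Phi : forall j, 'rV[Real]_(d j) -> X) : Prop :=
  hausdorff_space X /\
  (forall j, {within disk (d j), continuous (Phi j)}) /\
  (* they restrict to homeomorphisms int D^n -> e_j *)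
  (forall j, {in odisk (d j) &, injective (Phi j)}) /\
  (forall j (W : set 'rV[Real]_(d j)), open W -> W `<=` odisk (d j) ->
     exists O : set X, open O /\ Phi j @` W = O `&` ocell Phi j) /\
  (forall x, exists j, ocell Phi j x) /\
  (forall i j, ocell Phi i `&` ocell Phi j !=set0 -> i = j) /\
  (forall j, exists F : set J, finite_set F /\ (forall i, F i -> (d i < d j)%N) /\
     Phi j @` sphere (d j) `<=` \bigcup_(i in F) ocell Phi i) /\
  (forall A : set X, closed A <-> forall j, closed (disk (d j) `&` Phi j @^-1` A)).

Definition CW_locally_finite (X : topologicalType) (J : Type) (d : J -> nat)
    (Phi : forall j, 'rV[Real]_(d j) -> X) : Prop :=
  forall x : X, exists N : set X, nbhs x N /\
    finite_set [set j | ocell Phi j `&` N !=set0].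

(* Main.v *)
Require Import Defs.
From HB Require Import structures.
From mathcomp Require Import all_boot all_order all_algebra generic_quotient.
From mathcomp Require Import all_classical all_reals all_analysis.
From mathcomp Require Import Rstruct Rstruct_topology.
From mathcomp Require Import lra.
Import Order.TTheory GRing.Theory Num.Theory.
Local Open Scope classical_set_scope.
Local Open Scope ring_scope.
Local Open Scope quotient_scope.

Section Iunit_facts.
Local Notation Iu := Iunit.

Lemma Iset0 : Iset 0. Proof. by rewrite /Iset /= in_itv /= lexx ler01. Qed.
Lemma Iset1 : Iset 1. Proof. by rewrite /Iset /= in_itv /= lexx ler01. Qed.

Definition i0 : Iu := @SigSub _ _ Iset 0 (mem_set Iset0).

Definition iu_of (r : Rdefinitions.R) : Iu :=
  if pselect (Iset r) is left h then @SigSub _ _ Iset r (mem_set h) else i0.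

Lemma iu_ofK r : Iset r -> set_val (iu_of r) = r.
Proof. by rewrite /iu_of; case: pselect => // h _; rewrite set_valE. Qed.

Lemma Iu_val_in (t : Iu) : Iset (set_val t).
Proof. by case: t => x h; rewrite set_valE /=; exact: set_mem. Qed.

Lemma iu_valK (t : Iu) : iu_of (set_val t) = t.
Proof.
rewrite /iu_of; case: pselect => [h|nh]; last by exfalso; apply: nh; exact: Iu_val_in.
by apply: eq_sig_hprop; rewrite ?set_valE.

Qed.

Lemma Iu_ge0 (t : Iu) : 0 <= set_val t.
Proof. by have := Iu_val_in t; rewrite /Iset /= in_itv /= => /andP[]. Qed.
Lemma Iu_le1 (t : Iu) : set_val t <= 1.
Proof. by have := Iu_val_in t; rewrite /Iset /= in_itv /= => /andP[]. Qed.

Lemma iu_of_within : {within Iset, continuous iu_of}.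
Proof.
apply/subspace_sigL_continuousP.
have -> : sigL Iset iu_of = id.
  by apply: funext => t /=; rewrite iu_valK.
by move=> x; exact: cvg_id.
Qed.

Lemma iu_image : iu_of @` Iset = setT.
Proof.
apply/seteqP; split => // t _; exists (set_val t); first exact: Iu_val_in.
exact: iu_valK.
Qed.

Lemma Iu_connected : connected [set: Iu].
Proof.
rewrite -iu_image; apply: connected_continuous_connected; last exact: iu_of_within.
by apply/connected_intervalP; exact: interval_is_interval.
Qed.

Lemma Iu_compact : compact [set: Iu].
Proof.
rewrite -iu_image; apply: continuous_compact; first exact: iu_of_within.
exact: segment_compact.
Qed.

Lemma Iu_locally_compact : locally_compact [set: Iu].
Proof.
move=> x _; exists setT; first by rewrite withinET; exact: filterT.
split; [exact: Iu_compact | exact: closedT].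
Qed.

Lemma Iu_regular : regular_space Iu.
Proof. exact: uniform_regular. Qed.

Lemma Iu_nbhsP (t : Iu) (B : set Iu) : nbhs t B ->
  exists2 e : Rdefinitions.R, 0 < e & forall s : Iu, `|set_val t - set_val s| < e -> B s.
Proof.
move/nbhs_ballP => [e e0 /= he]; exists e => // s hs; apply: he.
Qed.

Lemma set_val_continuous : continuous (set_val : Iu -> Rdefinitions.R).
Proof. exact: (@initial_continuous _ _ set_val). Qed.

Lemma Iu_lt_open (c : Rdefinitions.R) : open [set s : Iu | set_val s < c].
Proof.
have -> : [set s : Iu | set_val s < c] = set_val @^-1` [set x | x < c] by [].
by apply: open_comp; [move=> x _; exact: set_val_continuous | exact: open_lt].
Qed.

Lemma Iu_gt_open (c : Rdefinitions.R) : open [set s : Iu | c < set_val s].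
Proof.
have -> : [set s : Iu | c < set_val s] = set_val @^-1` [set x | c < x] by [].
by apply: open_comp; [move=> x _; exact: set_val_continuous | exact: open_gt].
Qed.

End Iunit_facts.

Lemma near_eq_continuous {T U : topologicalType} (f g : T -> U) (x : T) :
  nbhs x [set y | f y = g y] -> {for x, continuous g} -> {for x, continuous f}.
Proof.
move=> efg cg B; have fxgx : f x = g x := nbhs_singleton efg.
rewrite fxgx => /cg gB.
by apply: filterS (filterI efg gB) => y [fy gy]; rewrite /= fy.
Qed.

Lemma curry_continuous_at {U V W : topologicalType} (f : U * V -> W) (x : U) :
  (forall v, {for (x, v), continuous f}) ->
  {for x, continuous (curry f : U -> {compact-open, V -> W})}.
Proof.
move=> ctsf; apply/compact_open_cvgP => K O /= cptK oO fKO.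
near=> z => w /= [+ + <-]; near: z.
move/compact_near_coveringP/near_covering_withinP : cptK; apply.
move=> v Kv; have [[P Q] [Px Qv] PQfO] : nbhs (x, v) (f @^-1` O).
  by apply: ctsf; move: oO; rewrite openE; apply; apply: fKO; exists v.
by exists (Q, P) => // -[b a] /= [Qb Pa] Kb; exact: PQfO.
Unshelve. all: by end_near. Qed.

Lemma uncurry_continuous_at {V W : topologicalType}
  (u : {compact-open, V -> W}) (v : V) :
  locally_compact [set: V] -> @regular_space V -> continuous (u : V -> W) ->
  {for (u, v), continuous (fun p : {compact-open, V -> W} * V => (p.1 : V -> W) p.2)}.
Proof.
move=> lcV reg cfp D.
rewrite /= nbhsE.
move=> [ O [oO Ofuv]] /filterS.
apply; have [B] := @lcV v I; rewrite withinET => Bv [cptB clB].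
have [R Rv RO] : exists2 R, nbhs v R & forall z, closure R z -> O (u z).
  have [] := reg v (u @^-1` O); first by apply: cfp; exact: open_nbhs_nbhs.
  by move=> R ? ?; exists R.
exists ([set g : {compact-open, V -> W} | g @` (B `&` closure R) `<=` O], B `&` closure R).
  split; [apply: open_nbhs_nbhs; split | apply: filterI] => //.
  - apply: compact_open_open => //; apply: compact_closedI => //.
    exact: closed_closure.
  - by move=> ? [x [? + <-]]; apply: RO.
  - by apply: filterS; first exact: subset_closure.
by case=> a r /= [fBMO [Br] cmR]; apply: fBMO; exists r.
Qed.

Lemma initial_continuous_at {Y : choiceType} {X Z : topologicalType}
  (w : Y -> Z) (f : X -> initial_topology w) (x : X) :
  {for x, continuous (w \o f)} -> {for x, continuous f}.
Proof.
move=> cf U [?/= [[W oW <-]]] /= Wsfz /filterS; apply; apply: cf.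
exact: open_nbhs_nbhs.
Qed.

Section covering.
Context {Xt X : topologicalType} (P : Xt -> X) (cov : covering_map P).

Lemma local_section (x : X) : exists U : set X, open U /\ U x /\
  forall y : Xt, U (P y) -> exists (V : set Xt) (sig : X -> Xt),
    [/\ open V, V y, (forall x', U x' -> V (sig x') /\ P (sig x') = x'),
        (forall y', V y' -> sig (P y') = y') &
        (forall x', U x' -> {for x', continuous sig})].
Proof.
case: cov => cP [sP evc]; have [U [oU [Ux [K [V [oV [disj [preU hV]]]]]]]] := evc x.
exists U; split => //; split => // y Uy.
have : (P @^-1` U) y by [].
rewrite preU => -[k _ Vky].
have [injk [imk opk]] := hV k.
have [sig hsig] : exists sig : X -> Xt, forall x', U x' -> V k (sig x') /\ P (sig x') = x'.
  have /choice[sig hs] : forall x', exists y', U x' -> V k y' /\ P y' = x'.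
    move=> x'; case: (pselect (U x')) => [Ux'|nUx']; last by exists y.
    by move: Ux'; rewrite -imk => -[y' Vy' <-]; exists y'.
  by exists sig.
have sigK : forall y', V k y' -> sig (P y') = y'.
  move=> y' Vy'; have [h1 h2] := hsig (P y') ltac:(by rewrite -imk; exists y').
  by apply: injk => //; exact: mem_set.
exists (V k), sig; split => //.
move=> x' Ux' B; rewrite nbhsE => -[W [oW Wsx] WB].
have [Vsx Psx] := hsig x' Ux'.
have oWV : open (P @` (W `&` V k)) by apply: opk => //; exact: openI.
have : nbhs x' (P @` (W `&` V k)).
  by apply: open_nbhs_nbhs; split => //; exists (sig x') => //.
apply: filterS => _ [w [Ww Vw] <-]; rewrite /= sigK //; exact: WB.
Qed.

Lemma in_sheet (y : Xt) : exists U : set X, open U /\ U (P y) /\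
  exists (K : Type) (V : K -> set Xt),
    [/\ (forall k, open (V k)), (forall k l, k <> l -> V k `&` V l = set0),
      P @^-1` U = \bigcup_k V k & forall k, {in V k &, injective P}].
Proof.
case: cov => cP [sP evc]; have [U [oU [Ux [K [V [oV [disj [preU hV]]]]]]]] := evc (P y).
exists U; split => //; split => //; exists K, V; split => //.
by move=> k; case: (hV k).
Qed.

Lemma lift_unique (g1 g2 : Iunit -> Xt) (t0 : Iunit) :
  continuous g1 -> continuous g2 -> (forall t, P (g1 t) = P (g2 t)) ->
  g1 t0 = g2 t0 -> forall t, g1 t = g2 t.
Proof.
move=> c1 c2 Pg e0.
pose E := [set t | g1 t = g2 t].
have oE : open E.
  rewrite openE => t Et.
  have [U [oU [Uy [K [V [oV disj preU inj]]]]]] := in_sheet (g1 t).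
  have : (P @^-1` U) (g1 t) by [].
  rewrite preU => -[k _ Vk].
  have n1 : nbhs t (g1 @^-1` V k) by apply: c1; exact: open_nbhs_nbhs.
  have n2 : nbhs t (g2 @^-1` V k).
    by apply: c2; apply: open_nbhs_nbhs; split => //; rewrite -Et.
  apply: filterS (filterI n1 n2) => s [h1 h2]; rewrite /E /=.
  by apply: (inj k) => //; exact: mem_set.
have cE : closed E.
  rewrite -[E]setCK closedC openE => t nEt.
  have [U [oU [Uy [K [V [oV disj preU inj]]]]]] := in_sheet (g1 t).
  have : (P @^-1` U) (g1 t) by [].
  rewrite preU => -[k _ Vk].
  have : (P @^-1` U) (g2 t) by rewrite /= -Pg.
  rewrite preU => -[l _ Vl].
  have kl : k <> l.
    move=> kl; apply: nEt; subst l; apply: (inj k) => //; exact: mem_set.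
  have n1 : nbhs t (g1 @^-1` V k) by apply: c1; exact: open_nbhs_nbhs.
  have n2 : nbhs t (g2 @^-1` V l) by apply: c2; exact: open_nbhs_nbhs.
  apply: filterS (filterI n1 n2) => s [h1 h2] es.
  have : (V k `&` V l) (g1 s) by split => //; rewrite es.
  by rewrite disj.
have ET : E = setT.
  apply: Iu_connected; first by exists t0.
    by exists E => //; rewrite setTI.
  by exists E => //; rewrite setTI.
by move=> t; have : E t by rewrite ET.
Qed.
End covering.

Lemma slice_cont {Z T : topologicalType} (G : Z * Iunit -> T) z t :
  {for (z, t), continuous G} -> {for t, continuous (fun s => G (z, s))}.
Proof.
move=> cG.
have cp : {for t, continuous (fun s : Iunit => (z, s))}.
  move=> B [[B1 B2] /= [h1 h2] sub]; apply: filterS h2 => s hs.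
  by apply: (sub (z, s)); split => //; exact: nbhs_singleton h1.
exact: (continuous_comp cp cG).
Qed.

Lemma val_i0 : set_val i0 = 0. Proof. by rewrite set_valE. Qed.

Section lifting.
Context {Xt X : topologicalType} (P : Xt -> X) (cov : covering_map P).
Context {Z : topologicalType} (A : set Z) (oA : open A) (F : Z * Iunit -> X) (a : Z -> Xt).
Hypothesis hF : forall z t, A z -> {for (z, t), continuous F}.
Hypothesis ha : forall z, A z -> {for z, continuous a}.
Hypothesis h0 : forall z t, A z -> set_val t = 0 -> P (a z) = F (z, t).

Definition Qlift (z0 : Z) (r : Rdefinitions.R) : Prop :=
  exists N : set Z, nbhs z0 N /\ N `<=` A /\ exists L : Z * Iunit -> Xt,
   (forall t : Iunit, set_val t < r -> {for (z0, t), continuous L}) /\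
   forall z, N z -> forall t : Iunit, set_val t < r ->
     [/\ {for t, continuous (fun s => L (z, s))}, P (L (z, t)) = F (z, t) &
         (set_val t = 0 -> L (z, t) = a z)].

Lemma window z0 (m : Iunit) (U : set X) : A z0 -> open U -> U (F (z0, m)) ->
  exists N1, nbhs z0 N1 /\ exists2 d : Rdefinitions.R, 0 < d &
    forall z t, N1 z -> `|set_val m - set_val t| < d -> U (F (z, t)).
Proof.
move=> Az0 oU Um.
have := hF z0 m Az0 U (open_nbhs_nbhs (conj oU Um)).
case=> -[N1 B] /= [hN1 hB] sub.
have [d d0 hd] := @Iu_nbhsP _ _ hB.
exists N1; split => //; exists d => // z t N1z ht.
by apply: (sub (z, t)); split => //; exact: hd.
Qed.

Lemma lift_base z0 : A z0 -> exists2 e : Rdefinitions.R, 0 < e & Qlift z0 e.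
Proof.
move=> Az0.
have [U [oU [Ux hsec]]] := local_section P cov (F (z0, i0)).
have Pa : P (a z0) = F (z0, i0) by apply: h0 => //; exact: val_i0.
have UPa : U (P (a z0)) by rewrite Pa.
have [V [sig [oV Va sigU sigK sigC]]] := hsec (a z0) UPa.
have [N1 [hN1 [d d0 hd]]] := @window z0 i0 U Az0 oU Ux.
have hdd : forall z t, N1 z -> set_val t < d -> U (F (z, t)).
  move=> z t N1z ht; apply: hd => //.
  by rewrite val_i0 sub0r normrN ger0_norm //; exact: Iu_ge0.
exists d => //.
exists (N1 `&` (a @^-1` V) `&` A); split.
  apply: filterI; last exact: open_nbhs_nbhs.
  apply: filterI => //; apply: ha => //; exact: open_nbhs_nbhs.
split; first by move=> z [[]].
exists (sig \o F); split.
  move=> t tlt; apply: continuous_comp; first exact: hF.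
  apply: sigC; apply: hdd => //; exact: nbhs_singleton.
move=> z [[N1z Vaz] Az] t tlt.
have Ut : U (F (z, t)) by apply: hdd.
split.
- apply: (@continuous_comp _ _ _ (fun s => F (z, s)) sig).
    exact: slice_cont (hF _ _ Az).
  exact: sigC.
- by case: (sigU _ Ut).
- by move=> t0; rewrite /= -(h0 z t Az t0) sigK.
Qed.

Lemma lift_step z0 (m : Iunit) : A z0 -> 0 < set_val m ->
  exists2 d : Rdefinitions.R, 0 < d & forall r', set_val m - d < r' ->
    Qlift z0 r' -> Qlift z0 (set_val m + d).
Proof.
move=> Az0 m0.
have [U [oU [Ux hsec]]] := local_section P cov (F (z0, m)).
have [N1 [hN1 [d0 d00 hd0]]] := @window z0 m U Az0 oU Ux.
have [d [dpos [dd0 dm]]] : exists d : Rdefinitions.R,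
    0 < d /\ d <= d0 / 2 /\ d <= set_val m / 2.
  exists (Num.min (d0 / 2) (set_val m / 2)); split; first by rewrite lt_min !divr_gt0.
  by split; rewrite ge_min lexx ?orbT.
have m1 := Iu_le1 m.
exists d; first exact: dpos.
move=> r' hr' [N [hN [NA [L [Lc Lz]]]]].
pose tj := iu_of (set_val m - d).
have vtj : set_val tj = set_val m - d.
  by apply: iu_ofK; rewrite /Iset /= in_itv /=; apply/andP; split; lra.
have tjr : set_val tj < r' by rewrite vtj.
have Utj : U (F (z0, tj)).
  apply: hd0; first exact: nbhs_singleton.
  by rewrite vtj ltr_norml; apply/andP; split; lra.
have [_ PL _] := Lz z0 (nbhs_singleton hN) tj tjr.
have UPL : U (P (L (z0, tj))) by rewrite PL.
have [V [sig [oV Vy sigU sigK sigC]]] := hsec (L (z0, tj)) UPL.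
have := Lc tj tjr V (open_nbhs_nbhs (conj oV Vy)).
case=> -[N2 B2] /= [hN2 hB2] sub2.
have [e e0 he] := @Iu_nbhsP _ _ hB2.
have [e' [e'0 [e'e [e'r e'd]]]] : exists e' : Rdefinitions.R,
    0 < e' /\ e' <= e /\ e' <= r' - set_val tj /\ e' <= d.
  exists (Num.min e (Num.min (r' - set_val tj) d)); split.
    rewrite !lt_min; apply/andP; split => //; apply/andP; split => //.
    by rewrite subr_gt0.
  split; first by rewrite ge_min lexx.
  split; first by rewrite !ge_min lexx orbT.
  by rewrite ge_min; apply/orP; right; rewrite ge_min; apply/orP; right.
pose N' := N `&` N1 `&` N2.
have AG : forall z t, N' z -> `|set_val tj - set_val t| < e' ->
    L (z, t) = sig (F (z, t)).
  move=> z t [[Nz N1z] N2z] ht.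
  have Vt : V (L (z, t)).
    by apply: (sub2 (z, t)); split => //; apply: he; exact: lt_le_trans ht e'e.
  have tr : set_val t < r'.
    by move: ht; rewrite ltr_norml => /andP[h1 h2]; lra.
  have [_ PLt _] := Lz z Nz t tr.
  by rewrite -PLt sigK.
have WIN : forall z t, N1 z -> set_val tj - e' < set_val t ->
    set_val t < set_val m + d -> U (F (z, t)).
  move=> z t N1z h1 h2; apply: hd0 => //.
  by rewrite ltr_norml; apply/andP; split; lra.
pose L' := fun p : Z * Iunit =>
  if set_val p.2 < set_val tj then L p else sig (F p).
have hN' : nbhs z0 N' by apply: filterI => //; apply: filterI.
exists N'; split => //; split; first by move=> z [[/NA]].
exists L'; split.
  move=> t tlt; case: (boolP (set_val t < set_val tj)) => ht.
    apply: (@near_eq_continuous _ _ L' L).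
      exists (setT, [set s : Iunit | set_val s < set_val tj]).
        split => /=; first exact: filterT.
        by apply: open_nbhs_nbhs; split => //; exact: Iu_lt_open.
      by move=> [z s] /= [_ hs]; rewrite /L' /= hs.
    by apply: Lc; exact: lt_trans ht tjr.
  rewrite -leNgt in ht.
  apply: (@near_eq_continuous _ _ L' (sig \o F)).
    exists (N', [set s : Iunit | set_val tj - e' < set_val s]).
      split => //=.
      by apply: open_nbhs_nbhs; split; [exact: Iu_gt_open | rewrite /=; lra].
    move=> [z s] /= [N'z hs]; rewrite /L' /=; case: ifP => // h.
    by apply: AG => //; rewrite ltr_norml; apply/andP; split; lra.
  apply: continuous_comp; first exact: hF.
  apply: sigC; apply: WIN => //; [exact: nbhs_singleton hN1 | lra].
move=> z N'z t tlt.
have [[Nz N1z] N2z] := N'z.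
split.
- case: (boolP (set_val t < set_val tj)) => ht.
    apply: (@near_eq_continuous _ _ (fun s => L' (z, s)) (fun s => L (z, s))).
      apply: filterS (open_nbhs_nbhs (conj (Iu_lt_open (set_val tj)) ht)).
      by move=> s hs; rewrite /L' /= hs.
    by have [c _ _] := Lz z Nz t (lt_trans ht tjr).
  rewrite -leNgt in ht.
  have ht' : set_val tj - e' < set_val t by lra.
  apply: (@near_eq_continuous _ _ (fun s => L' (z, s)) (fun s => sig (F (z, s)))).
    apply: filterS (open_nbhs_nbhs (conj (Iu_gt_open (set_val tj - e')) ht')).
    move=> s hs; rewrite /L' /=; case: ifP => // h.
    by apply: AG => //; rewrite ltr_norml; apply/andP; split; move: hs => /=; lra.
  apply: (@continuous_comp _ _ _ (fun s => F (z, s)) sig).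
    exact: slice_cont (hF _ _ (NA _ Nz)).
  by apply: sigC; apply: WIN.
- rewrite /L' /=; case: ifP => h.
    by have [_ p _] := Lz z Nz t (lt_trans h tjr).
  have ht : set_val tj - e' < set_val t by move/negbT: h; rewrite -leNgt; lra.
  by case: (sigU _ (WIN z t N1z ht tlt)).
- move=> t0; have ht : set_val t < set_val tj by rewrite t0 vtj; lra.
  rewrite /L' /= ht.
  by have [_ _ i] := Lz z Nz t (lt_trans ht tjr); apply: i.
Qed.

Lemma lift_local z0 : A z0 -> exists N : set Z, nbhs z0 N /\ N `<=` A /\
  exists L : Z * Iunit -> Xt, (forall t, {for (z0, t), continuous L}) /\
  forall z, N z -> [/\ continuous (fun s => L (z, s)),
    forall t, P (L (z, t)) = F (z, t) &
    forall t, set_val t = 0 -> L (z, t) = a z].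
Proof.
move=> Az0.
have [r r1 Qr] : exists2 r, 1 < r & Qlift z0 r.
  apply: contrapT => hn.
  have ub : forall r, Qlift z0 r -> r <= 1.
    move=> r Qr; rewrite leNgt; apply/negP => h; apply: hn; exists r => //.
  have [eta eta0 Qeta] := @lift_base z0 Az0.
  have hs : has_sup (Qlift z0) by split; [exists eta | exists 1 => r Qr; exact: ub].
  have etam : eta <= sup (Qlift z0) := sup_upper_bound hs Qeta.
  have m1 : sup (Qlift z0) <= 1 by apply: ge_sup; [exists eta | move=> r Qr; exact: ub].
  have vm : set_val (iu_of (sup (Qlift z0))) = sup (Qlift z0).
    by apply: iu_ofK; rewrite /Iset /= in_itv /=; apply/andP; split; lra.
  have m0 : 0 < set_val (iu_of (sup (Qlift z0))) by rewrite vm; lra.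
  have [d d0 hd] := @lift_step z0 _ Az0 m0.
  have [r' Qr' r'm] := sup_adherent d0 hs.
  have := hd r' ltac:(by rewrite vm) Qr'.
  rewrite vm => /(sup_upper_bound hs) h; lra.
case: Qr => N [hN [NA [L [Lc Lz]]]].
exists N; split => //; split => //; exists L; split.
  by move=> t; apply: Lc; exact: le_lt_trans (Iu_le1 t) r1.
move=> z Nz; split.
- by move=> t; have [c _ _] := Lz z Nz t (le_lt_trans (Iu_le1 t) r1).
- by move=> t; have [_ p _] := Lz z Nz t (le_lt_trans (Iu_le1 t) r1).
- by move=> t; have [_ _ i] := Lz z Nz t (le_lt_trans (Iu_le1 t) r1).
Qed.

Lemma lift_global : exists L : Z * Iunit -> Xt, forall z, A z ->
  [/\ (forall t, {for (z, t), continuous L}), continuous (fun s => L (z, s)),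
     forall t, P (L (z, t)) = F (z, t) &
     forall t, set_val t = 0 -> L (z, t) = a z].
Proof.
have /choice[lam hlam] : forall z, exists lm : Iunit -> Xt, A z ->
    [/\ continuous lm, forall t, P (lm t) = F (z, t) &
        forall t, set_val t = 0 -> lm t = a z].
  move=> z; case: (pselect (A z)) => [Az|nAz]; last by exists (fun=> a z).
  have [N [hN [NA [L [Lc Lz]]]]] := @lift_local z Az.
  have [c p i] := Lz z (nbhs_singleton hN).
  by exists (fun s => L (z, s)).
exists (fun p => lam p.1 p.2) => z0 Az0.
have [c0 p0 i0'] := hlam z0 Az0.
split => //.
move=> t.
have [N [hN [NA [L [Lc Lz]]]]] := @lift_local z0 Az0.
apply: (@near_eq_continuous _ _ _ L); last exact: Lc.
exists (N, setT); first by split => //; exact: filterT.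
move=> [z s] /= [Nz _].
have [c p i] := Lz z Nz; have [c' p' i'] := hlam z (NA _ Nz).
apply: (@lift_unique _ _ P cov (lam z) (fun s => L (z, s)) i0) => //.
  by move=> u; rewrite p p'.
by rewrite i' ?i // val_i0.
Qed.

End lifting.

Lemma pair_cont_at {T U V : topologicalType} (f : T -> U) (g : T -> V) x :
  {for x, continuous f} -> {for x, continuous g} ->
  {for x, continuous (fun y => (f y, g y))}.
Proof.
move=> cf cg B [[B1 B2] /= [h1 h2] sub].
have n1 : nbhs x (f @^-1` B1) by apply: cf.
have n2 : nbhs x (g @^-1` B2) by apply: cg.
apply: (@filterS _ (nbhs x) _ _ _ _ (filterI n1 n2)) => y [hy1 hy2].
exact: (sub (f y, g y)).
Qed.

Lemma fst_cont_at {T U : topologicalType} (p : T * U) :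
  {for p, continuous (@fst T U)}.
Proof.
move=> B hB; exists (B, setT); first by split => //; exact: filterT.
by move=> [? ?] [].
Qed.

Lemma snd_cont_at {T U : topologicalType} (p : T * U) :
  {for p, continuous (@snd T U)}.
Proof.
move=> B hB; exists (setT, B); first by split => //; exact: filterT.
by move=> [? ?] [].
Qed.

Lemma settype_cont_at {T Z : topologicalType} (S : set T) (f : Z -> set_type S) z :
  {for z, continuous (set_val \o f)} -> {for z, continuous f}.
Proof.
move=> cf U [?/= [[W oW <-]]] /= Wsfz /filterS; apply; apply: cf.
exact: open_nbhs_nbhs.
Qed.

Lemma set_val_cont {T : topologicalType} (S : set T) (x : set_type S) :
  {for x, continuous (set_val : set_type S -> T)}.
Proof. exact: (@initial_continuous _ _ set_val). Qed.

Lemma qrel {Xt X : topologicalType} {P : Xt -> X} {x y : Xt * Xt} :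
  (\pi_(orbSp P) x : orbSp P) = \pi_(orbSp P) y -> orb_rel P x y.
Proof. move=> h. change (is_true (orb_equiv P x y)). apply/eqmodP. exact: h. Qed.

Lemma qrepr {Xt X : topologicalType} {P : Xt -> X} (w : orbSp P) :
  (\pi_(orbSp P) (repr w) : orbSp P) = w.
Proof. exact: reprK. Qed.

Lemma piopen {Xt X : topologicalType} {P : Xt -> X} (W : set (orbSp P)) :
  open (\pi_(orbSp P) @^-1` W) -> open W.
Proof. by []. Qed.

Theorem mainTheorem13 (X Xt : topologicalType) (J : Type) (d : J -> nat)
    (Phi : forall j, 'rV[Rdefinitions.R]_(d j) -> X) (P : Xt -> X) :
  @CW_structure X J d Phi -> @CW_locally_finite X J d Phi ->
  connected [set: X] -> universal_cover P ->
  forall k : nat, TCt_le P k -> TC_le Xt k.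
Proof.
move=> _ _ _ [cov _] k [U [oU [coverU secU]]].
have cP : continuous P by case: cov.
pose PP := fun z : Xt * Xt => (P z.1, P z.2).
have cPP : continuous PP.
  move=> z; apply: pair_cont_at.
    exact: (continuous_comp (fst_cont_at z) (cP _)).
  exact: (continuous_comp (snd_cont_at z) (cP _)).
have qpi : forall z : Xt * Xt, qmap (\pi_(orbSp P) z : orbSp P) = PP z.
  move=> z; rewrite /qmap.
  move: (qrepr (\pi_(orbSp P) z : orbSp P)) => /qrel /asboolP.
  move=> [g [[h [_ [_ [_ [_ Pg]]]]] [e1 e2]]].
  by rewrite /PP -e1 -e2 !Pg.
exists (fun i => PP @^-1` U i); split.
  by move=> i; apply: (proj1 (continuousP PP) cPP); exact: oU.
split.
  by move=> z; have [i hi] := coverU (PP z); exists i.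
move=> i.
have [s [scont smap]] := secU i.
pose A := PP @^-1` U i.
have oA : open A by apply: (proj1 (continuousP PP) cPP); exact: oU.
have oQ : open (@qmap _ _ P @^-1` U i : set (orbSp P)).
  apply: piopen.
  have -> : \pi_(orbSp P) @^-1` (@qmap _ _ P @^-1` U i) = A.
    by apply: funext => z; rewrite /A /= qpi.
  exact: oA.
have sc : forall z, A z -> {for (\pi_(orbSp P) z : orbSp P), continuous s}.
  move=> z Az; move: scont; rewrite continuous_open_subspace // => h.
  by apply: h; rewrite inE /= qpi.
pose F := fun p : (Xt * Xt) * Iunit => path_of (s (\pi_(orbSp P) p.1)) p.2.
have hF : forall z t, A z -> {for (z, t), continuous F}.
  move=> z t Az.
  pose G := fun p : (Xt * Xt) * Iunit =>
    ((path_of (s (\pi_(orbSp P) p.1)) : {compact-open, Iunit -> X}), p.2).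
  have -> : F = (fun q : {compact-open, Iunit -> X} * Iunit => (q.1 : Iunit -> X) q.2) \o G by [].
  apply: continuous_comp.
    apply: pair_cont_at; last exact: snd_cont_at.
    have c1 : {for z, continuous
        (fun z' => (path_of (s (\pi_(orbSp P) z')) : {compact-open, Iunit -> X}))}.
      apply: (@continuous_comp _ _ _ (fun z' => \pi_(orbSp P) z' : orbSp P)
        (fun w => (path_of (s w) : {compact-open, Iunit -> X}))).
        exact: pi_continuous.
      apply: (@continuous_comp _ _ _ s
        (fun w => (set_val w : {compact-open, Iunit -> X}))).
        exact: sc.
      exact: set_val_cont.
    exact: (continuous_comp (fst_cont_at (z, t)) c1).
  apply: uncurry_continuous_at; [exact: Iu_locally_compact | exact: Iu_regular |].
  exact: (set_valP (s (\pi_(orbSp P) z))).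
have ha : forall z, A z -> {for z, continuous (@fst Xt Xt)}.
  by move=> z _; exact: fst_cont_at.
have h0 : forall z t, A z -> set_val t = 0 -> P z.1 = F (z, t).
  move=> z t Az t0.
  have UA : U i (qmap (\pi_(orbSp P) z : orbSp P)) by rewrite qpi.
  have [gt [gc [gP gend]]] := smap _ UA.
  have e := gend t (iu_of 1) t0 (@iu_ofK 1 Iset1).
  move: (qrel e) => /asboolP [g [[h [_ [_ [_ [_ Pg]]]]] [e1 e2]]].
  by rewrite /F /= -gP -e1 Pg.
have [L hL] := @lift_global _ _ P cov _ A oA F fst hF ha h0.
have /choice[s' hs'] : forall z, exists w : PathSp Xt,
    A z -> path_of w = (curry L z : {compact-open, Iunit -> Xt}).
  move=> z; case: (pselect (A z)) => [Az|nAz].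
    have [_ c _ _] := hL z Az.
    exists (@SigSub _ _ [set f : {compact-open, Iunit -> Xt} | continuous (f : Iunit -> Xt)]
      (curry L z : {compact-open, Iunit -> Xt}) (mem_set c)) => _.
    by rewrite /path_of set_valE.
  have c : continuous (fun _ : Iunit => z.1) by exact: cst_continuous.
  by exists (@SigSub _ _ [set f : {compact-open, Iunit -> Xt} | continuous (f : Iunit -> Xt)]
      ((fun _ : Iunit => z.1) : {compact-open, Iunit -> Xt}) (mem_set c)).
exists s'; split.
  rewrite continuous_open_subspace // => z /set_mem Az.
  apply: settype_cont_at.
  apply: (@near_eq_continuous _ _ _ (curry L : Xt * Xt -> {compact-open, Iunit -> Xt})).
    apply: filterS (open_nbhs_nbhs (conj oA Az)) => z' Az'.
    exact: hs'.
  apply: curry_continuous_at => v; by case: (hL z Az).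
move=> z Az t; rewrite (hs' z Az) /=.
have [Lc cL PL iL] := hL z Az.
split; first by move=> t0; exact: iL.
move=> t1.
have UA : U i (qmap (\pi_(orbSp P) z : orbSp P)) by rewrite qpi.
have [gt [gc [gP gend]]] := smap _ UA.
have e := gend i0 t val_i0 t1.
move: (qrel e) => /asboolP [g [[h [_ [_ [gcont [_ Pg]]]]] [e1 e2]]].
have hu := @lift_unique _ _ P cov (g \o gt) (fun s => L (z, s)) i0.
have cg : continuous (g \o gt).
  by move=> u; apply: continuous_comp; [exact: gc | exact: gcont].
have hP : forall u, P ((g \o gt) u) = P (L (z, u)).
  by move=> u; rewrite /= Pg gP PL.
have h0' : (g \o gt) i0 = L (z, i0) by rewrite /= e1 iL // val_i0.
rewrite /curry /= -(hu cg cL hP h0' t) /=.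
exact: e2.
Qed.
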